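(* Let $d\ge1$ and $N>0$. For $\rho_z>0$ let $$G_{\rho_z}(r)=1-\frac1N\left(\frac{\rho_z}{r}\right)^{d/2}J_{d/2}(2\pi\rho_z r),\qquad r>0,$$ be the pair correlation function of a step blue noise pattern of $N$ samples in $d$ dimensions with zero region $\rho_z$. Call $\rho_z$ realizable if $G_{\rho_z}(r)\ge0$ for all $r>0$. Then the maximum realizable zero region is $$\rho_z^*=\left(\frac{N\,\Gamma\!\left(1+\frac d2\right)}{\pi^{d/2}}\right)^{1/d},$$ i.e. the inverse of the $d$-th root of the volume of a $d$-dimensional ball of radius $N^{-1/d}$. Equivalently, the minimum number of samples needed to realize a step blue noise pattern with zero region $\rho_z$ is $N=\pi^{d/2}\rho_z^d/\Gamma(1+d/2)$.
   Context: A step blue noise pattern with zero region $\rho_z$ is a sampling pattern whose radial power spectrum is $0$ for frequencies $\rho\le\rho_z$ and $1$ for $\rho>\rho_z$ (so its power spectrum is automatically nonnegative); its pair correlation function is the $G_{\rho_z}$ given in the claim. $J_{d/2}$ denotes the Bessel function of the first kind of order $d/2$ and $\Gamma$ the gamma function. Realizability of a sampling pattern requires nonnegativity of its power spectrum and of its pair correlation function. *)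

(* Defs.v *)
From Stdlib Require Import Reals Factorial.
From Coquelicot Require Import Coquelicot.
Open Scope R_scope.

Definition Gamma (s : R) : R :=
  RInt_gen (fun t => Rpower t (s - 1) * exp (- t)) (at_right 0) (Rbar_locally p_infty).

Definition BesselJ (nu x : R) : R :=
  Series (fun m : nat =>
    (-1) ^ m / (INR (fact m) * Gamma (INR m + nu + 1)) * Rpower (x / 2) (2 * INR m + nu)).

Definition G_step (d : nat) (N rho_z r : R) : R :=
  1 - / N * Rpower (rho_z / r) (INR d / 2) * BesselJ (INR d / 2) (2 * PI * rho_z * r).

Definition realizable (d : nat) (N rho_z : R) : Prop :=
  0 < rho_z /\ forall r : R, 0 < r -> 0 <= G_step d N rho_z r.

Definition rho_star (d : nat) (N : R) : R :=
  Rpower (N * Gamma (1 + INR d / 2) / Rpower PI (INR d / 2)) (/ INR d).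

Definition N_min (d : nat) (rho_z : R) : R :=
  Rpower PI (INR d / 2) * rho_z ^ d / Gamma (1 + INR d / 2).

(* Main.v *)
Require Import Defs.
From Stdlib Require Import Reals Lra Lia Factorial.
From Coquelicot Require Import Coquelicot.
Open Scope R_scope.

Lemma lim_ge {T} (F : (T -> Prop) -> Prop) {FF : ProperFilter F} (f : T -> R) L c :
  filterlim f F (locally L) -> F (fun x => c <= f x) -> c <= L.
Proof.
  intros Hl Hc. destruct (Rle_lt_dec c L) as [h|h]; auto.
  assert (He : 0 < c - L) by lra.
  apply filterlim_locally with (eps := mkposreal _ He) in Hl.
  destruct (filter_ex _ (filter_and _ _ Hl Hc)) as [x [H1 H2]].
  change (Rabs (f x - L) < c - L) in H1.
  apply Rabs_def2 in H1. lra.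
Qed.

Lemma lim_le {T} (F : (T -> Prop) -> Prop) {FF : ProperFilter F} (f : T -> R) L c :
  filterlim f F (locally L) -> F (fun x => f x <= c) -> L <= c.
Proof.
  intros Hl Hc. destruct (Rle_lt_dec L c) as [h|h]; auto.
  assert (He : 0 < L - c) by lra.
  apply filterlim_locally with (eps := mkposreal _ He) in Hl.
  destruct (filter_ex _ (filter_and _ _ Hl Hc)) as [x [H1 H2]].
  change (Rabs (f x - L) < L - c) in H1.
  apply Rabs_def2 in H1. lra.
Qed.

Lemma cauchy_dom {T} (F : (T -> Prop) -> Prop) {FF : ProperFilter F} (f H : T -> R) LH
  (Q : T -> Prop) :
  filterlim H F (locally LH) -> F Q ->
  (forall x y, Q x -> Q y -> Rabs (f x - f y) <= Rabs (H x - H y)) ->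
  exists L, filterlim f F (locally L).
Proof.
  intros HH HQ Hb.
  apply (filterlim_locally_cauchy (U := R_CompleteSpace)).
  intros eps.
  assert (He : 0 < eps / 2) by (destruct eps; simpl; lra).
  apply filterlim_locally with (eps := mkposreal _ He) in HH.
  exists (fun x => Q x /\ ball LH (mkposreal _ He) (H x)). split.
  - apply filter_and; auto.
  - intros u v [Qu Hu] [Qv Hv].
    change (Rabs (H u - LH) < eps/2) in Hu. change (Rabs (H v - LH) < eps/2) in Hv.
    change (Rabs (f v - f u) < eps).
    eapply Rle_lt_trans. apply Hb; auto.
    apply Rabs_def2 in Hu. apply Rabs_def2 in Hv. apply Rabs_def1; lra.
Qed.

Lemma int_dom (g u H : R -> R) x y :
  (forall t, Rmin x y <= t <= Rmax x y ->
     (0 <= g t <= u t) /\ continuous g t /\ is_derive H t (u t) /\ continuous u t) ->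
  Rabs (RInt g x y) <= Rabs (H y - H x).
Proof.
  intros Hc.
  assert (K : forall a b, a <= b -> (forall t, a <= t <= b ->
     (0 <= g t <= u t) /\ continuous g t /\ is_derive H t (u t) /\ continuous u t) ->
     Rabs (RInt g a b) <= Rabs (H b - H a)).
  { clear. intros a b hab Hc.
    assert (mn : Rmin a b = a) by (apply Rmin_left; lra).
    assert (mx : Rmax a b = b) by (apply Rmax_right; lra).
    assert (eg : ex_RInt g a b).
    { apply (ex_RInt_continuous (V:=R_CompleteNormedModule)). rewrite mn, mx. intros; apply Hc; auto. }
    assert (iu : is_RInt u a b (minus (H b) (H a))).
    { apply (is_RInt_derive (V:=R_CompleteNormedModule)); rewrite mn, mx; intros; apply Hc; auto. }
    assert (h0 : 0 <= RInt g a b).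
    { apply RInt_ge_0; auto. intros; apply Hc; lra. }
    assert (h1 : RInt g a b <= H b - H a).
    { apply (is_RInt_le g u a b); auto. apply (RInt_correct (V:=R_CompleteNormedModule)); auto.
      intros; apply Hc; lra. }
    rewrite Rabs_pos_eq; auto. rewrite Rabs_pos_eq; lra. }
  destruct (Rle_lt_dec x y) as [h|h].
  - apply K; auto. intros t ht; apply Hc.
    rewrite Rmin_left by lra; rewrite Rmax_right by lra; auto.
  - rewrite <- (opp_RInt_swap g). 2:{ apply (ex_RInt_continuous (V:=R_CompleteNormedModule)). intros; apply Hc.
      destruct H0; split. rewrite Rmin_comm; auto. rewrite Rmax_comm; auto. }
    change (Rabs (- RInt g y x) <= Rabs (H y - H x)).
    rewrite Rabs_Ropp. replace (H y - H x) with (- (H x - H y)) by ring.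
    rewrite Rabs_Ropp. apply K. lra. intros t ht; apply Hc.
    rewrite Rmin_right by lra; rewrite Rmax_left by lra; auto.
Qed.

Lemma is_derive_Rpower a t : 0 < t -> is_derive (fun t => Rpower t a) t (a * Rpower t (a - 1)).
Proof.
  intros ht. unfold Rpower. auto_derive. auto.
  replace ((a - 1) * ln t) with (a * ln t + - ln t) by ring.
  rewrite exp_plus, exp_Ropp, exp_ln by auto. field. lra.
Qed.

Lemma continuous_Rpower a t : 0 < t -> continuous (fun t => Rpower t a) t.
Proof. intros ht. apply (ex_derive_continuous (K:=R_AbsRing) (V:=R_NormedModule)). eexists. apply is_derive_Rpower; auto. Qed.

Lemma exp_pow_n x n : exp x ^ n = exp (INR n * x).
Proof.
  induction n. simpl. rewrite Rmult_0_l, exp_0. auto.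
  rewrite S_INR. simpl. rewrite IHn. rewrite <- exp_plus. f_equal. ring.
Qed.

Lemma pow_le_exp t n : 0 <= t -> (1 <= n)%nat -> t ^ n <= INR n ^ n * exp t.
Proof.
  intros ht hn.
  assert (hn' : 0 < INR n) by (apply lt_0_INR; lia).
  assert (h1 : t / INR n <= exp (t / INR n)).
  { pose proof (exp_ineq1_le (t / INR n)). lra. }
  assert (h2 : (t / INR n) ^ n <= exp (t / INR n) ^ n).
  { apply pow_incr. split; auto. apply Rmult_le_pos; auto. left; apply Rinv_0_lt_compat; auto. }
  rewrite exp_pow_n in h2. replace (INR n * (t / INR n)) with t in h2 by (field; lra).
  replace (t ^ n) with (INR n ^ n * (t / INR n) ^ n).
  2:{ rewrite <- Rpow_mult_distr. f_equal. field. lra. }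
  apply Rmult_le_compat_l; auto. apply pow_le; lra.
Qed.

Lemma Rpower_minus1 t a : 0 < t -> Rpower t (a - 1) = Rpower t a / t.
Proof.
  intros ht. unfold Rminus. rewrite Rpower_plus, Rpower_Ropp, Rpower_1 by auto. reflexivity.
Qed.

Lemma Rpower_pos t a : 0 < Rpower t a.
Proof. unfold Rpower. apply exp_pos. Qed.

Lemma tail_bound t s n : 1 <= t -> s + 1 <= INR n -> (1 <= n)%nat ->
  Rpower t s * exp (- t) <= INR n ^ n / t.
Proof.
  intros ht hs hn.
  assert (h1 : Rpower t s <= Rpower t (INR n - 1)) by (apply Rle_Rpower; lra).
  rewrite Rpower_minus1, Rpower_pow in h1 by lra.
  pose proof (pow_le_exp t n ltac:(lra) hn) as h2.
  pose proof (exp_pos (-t)) as h3.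
  assert (h4 : exp t * exp (- t) = 1) by (rewrite <- exp_plus; replace (t + - t) with 0 by ring; apply exp_0).
  apply Rle_trans with (t ^ n / t * exp (- t)).
  apply Rmult_le_compat_r; lra.
  unfold Rdiv. rewrite (Rmult_comm (t^n)), Rmult_assoc.
  rewrite (Rmult_comm (INR n ^ n)). apply Rmult_le_compat_l.
  left; apply Rinv_0_lt_compat; lra.
  apply Rle_trans with (INR n ^ n * exp t * exp (- t)).
  apply Rmult_le_compat_r; lra. rewrite Rmult_assoc, h4. lra.
Qed.

Lemma exists_n s : exists n, s + 1 <= INR n /\ (1 <= n)%nat.
Proof.
  destruct (INR_unbounded (Rmax (s+1) 1)) as [n hn].
  exists n. split. pose proof (Rmax_l (s+1) 1). lra.
  destruct n. simpl in hn. pose proof (Rmax_r (s+1) 1). lra. lia.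
Qed.

Lemma lim_inf_dom (f : R -> R) C :
  (forall t, 1 <= t -> Rabs (f t) <= C / t) ->
  filterlim f (Rbar_locally p_infty) (locally 0).
Proof.
  intros Hb. apply filterlim_locally. intros eps.
  exists (Rabs C / eps + 1). intros x hx.
  assert (hC : 0 <= Rabs C / eps) by (apply Rmult_le_pos; [apply Rabs_pos| left; apply Rinv_0_lt_compat; apply cond_pos]).
  change (Rabs (f x - 0) < eps). rewrite Rminus_0_r.
  assert (hx1 : 1 <= x) by lra.
  eapply Rle_lt_trans. apply Hb; auto.
  apply Rle_lt_trans with (Rabs C / x).
  unfold Rdiv. apply Rmult_le_compat_r. left; apply Rinv_0_lt_compat; lra. apply Rle_abs.
  apply Rmult_lt_reg_r with x. lra.
  replace (Rabs C / x * x) with (Rabs C) by (field; lra).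
  destruct eps as [e he]; simpl in *.
  assert (Rabs C = Rabs C / e * e) by (field; lra). nra.
Qed.

Lemma lim_0_dom (f : R -> R) K s : 0 < s ->
  (forall t, 0 < t < 1 -> Rabs (f t) <= K * Rpower t s) ->
  filterlim f (at_right 0) (locally 0).
Proof.
  intros hs Hb. apply filterlim_locally. intros [e he].
  set (K' := Rabs K + 1).
  assert (hK : 0 < K') by (unfold K'; pose proof (Rabs_pos K); lra).
  set (d := Rmin 1 (Rpower (e / K') (/ s))).
  assert (hd : 0 < d) by (apply Rmin_pos; [lra| apply Rpower_pos]).
  exists (mkposreal d hd). intros y hy hy0.
  change (Rabs (y - 0) < d) in hy. rewrite Rminus_0_r, Rabs_pos_eq in hy by lra.
  change (Rabs (f y - 0) < e). rewrite Rminus_0_r.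
  assert (hd1 : d <= 1) by apply Rmin_l. assert (hd2 : d <= Rpower (e / K') (/ s)) by apply Rmin_r.
  assert (hy1 : y < 1) by lra.
  eapply Rle_lt_trans. apply Hb; lra.
  assert (h1 : Rpower y s < Rpower (Rpower (e / K') (/ s)) s).
  { apply Rlt_Rpower_l; auto. split; auto. lra. }
  rewrite Rpower_mult, Rinv_l, Rpower_1 in h1 by (try lra; apply Rdiv_lt_0_compat; lra).
  apply Rle_lt_trans with (K' * Rpower y s).
  apply Rmult_le_compat_r. left; apply Rpower_pos. unfold K'; pose proof (Rle_abs K); lra.
  apply Rmult_lt_compat_l with (r := K') in h1; auto.
  replace (K' * (e / K')) with e in h1 by (field; lra). lra.
Qed.

Definition gf s t := Rpower t (s - 1) * exp (- t).

Lemma Gamma_def s : Gamma s = RInt_gen (gf s) (at_right 0) (Rbar_locally p_infty).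
Proof. reflexivity. Qed.

Lemma gf_pos s t : 0 < gf s t.
Proof. unfold gf. apply Rmult_lt_0_compat. apply Rpower_pos. apply exp_pos. Qed.

Lemma gf_cont s t : 0 < t -> continuous (gf s) t.
Proof.
  intros ht. apply (ex_derive_continuous (K:=R_AbsRing) (V:=R_NormedModule)).
  unfold gf, Rpower. auto_derive. auto.
Qed.

Lemma loc_pos x : 0 < x -> locally x (fun y => 0 < y).
Proof.
  intros hx. assert (h : 0 < x / 2) by lra. exists (mkposreal _ h). intros y hy.
  change (Rabs (y - x) < x / 2) in hy. apply Rabs_def2 in hy. lra.
Qed.

Lemma ex_RInt_gf s a b : 0 < a -> 0 < b -> ex_RInt (gf s) a b.
Proof.
  intros ha hb. apply (ex_RInt_continuous (V:=R_CompleteNormedModule)).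
  intros z hz. apply gf_cont. pose proof (Rmin_pos a b ha hb). lra.
Qed.

Definition Fg s x := RInt (gf s) 1 x.

Lemma Fg_diff s a b : 0 < a -> 0 < b -> Fg s b - Fg s a = RInt (gf s) a b.
Proof.
  intros ha hb. unfold Fg.
  rewrite <- (RInt_Chasles (V:=R_CompleteNormedModule) (gf s) 1 a b).
  unfold plus; simpl. ring.
  apply ex_RInt_gf; lra. apply ex_RInt_gf; lra.
Qed.

Lemma Fg_derive s x : 0 < x -> is_derive (Fg s) x (gf s x).
Proof.
  intros hx. apply (is_derive_RInt (V:=R_CompleteNormedModule) (gf s) (Fg s) 1 x).
  eapply filter_imp. 2: apply loc_pos; exact hx.
  intros y hy. apply (RInt_correct (V:=R_CompleteNormedModule)). apply ex_RInt_gf; lra.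
  apply gf_cont; auto.
Qed.

Lemma H0_derive s t : 0 < s -> 0 < t -> is_derive (fun t => / s * Rpower t s) t (Rpower t (s - 1)).
Proof.
  intros hs ht. replace (Rpower t (s - 1)) with (/ s * (s * Rpower t (s - 1))) by (field; lra).
  apply is_derive_scal, is_derive_Rpower; auto.
Qed.

Lemma Fg_lim0 s : 0 < s -> exists L, filterlim (Fg s) (at_right 0) (locally L).
Proof.
  intros hs.
  apply (cauchy_dom _ (Fg s) (fun t => / s * Rpower t s) 0 (fun t => 0 < t < 1)).
  - apply (lim_0_dom _ (/ s) s); auto. intros t ht.
    rewrite Rabs_pos_eq. lra. apply Rmult_le_pos. left; apply Rinv_0_lt_compat; auto.
    left; apply Rpower_pos.
  - assert (h1 : 0 < 1) by lra. exists (mkposreal 1 h1). intros y hy hy0.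
    change (Rabs (y - 0) < 1) in hy. rewrite Rminus_0_r in hy. apply Rabs_def2 in hy. lra.
  - intros x y hx hy. rewrite Fg_diff by lra.
    apply (int_dom (gf s) (fun t => Rpower t (s - 1)) (fun t => / s * Rpower t s) y x).
    intros t ht.
    assert (h0 : 0 < t). { pose proof (Rmin_pos y x ltac:(lra) ltac:(lra)). lra. }
    assert (h1 : t < 1). { pose proof (Rmax_lub_lt y x 1 ltac:(lra) ltac:(lra)). lra. }
    split; [|split; [|split]].
    + split. left; apply gf_pos. unfold gf.
      pattern (Rpower t (s - 1)) at 2; rewrite <- Rmult_1_r.
      apply Rmult_le_compat_l. left; apply Rpower_pos.
      rewrite <- exp_0. left. apply exp_increasing. lra.
    + apply gf_cont; auto.
    + apply H0_derive; auto.
    + apply continuous_Rpower; auto.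
Qed.

Lemma gf_tail s t n : 1 <= t -> s + 1 <= INR n -> (1 <= n)%nat ->
  gf s t <= INR n ^ n / (t * t).
Proof.
  intros ht hs hn. unfold gf. rewrite Rpower_minus1 by lra.
  pose proof (tail_bound t s n ht hs hn).
  replace (Rpower t s / t * exp (- t)) with ((Rpower t s * exp (- t)) / t) by (field; lra).
  replace (INR n ^ n / (t * t)) with ((INR n ^ n / t) / t) by (field; lra).
  unfold Rdiv. apply Rmult_le_compat_r. left; apply Rinv_0_lt_compat; lra. auto.
Qed.

Lemma Fg_liminf s : 0 < s -> exists L, filterlim (Fg s) (Rbar_locally p_infty) (locally L).
Proof.
  intros hs. destruct (exists_n s) as [n [hn1 hn2]].
  set (C := INR n ^ n).
  assert (hC : 0 <= C) by (apply pow_le, pos_INR).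
  apply (cauchy_dom _ (Fg s) (fun t => - C / t) 0 (fun t => 1 < t)).
  - apply (lim_inf_dom _ C). intros t ht.
    replace (- C / t) with (- (C / t)) by (field; lra). rewrite Rabs_Ropp.
    rewrite Rabs_pos_eq. lra. apply Rmult_le_pos; auto. left; apply Rinv_0_lt_compat; lra.
  - exists 1. auto.
  - intros x y hx hy. rewrite Fg_diff by lra.
    apply (int_dom (gf s) (fun t => C / (t * t)) (fun t => - C / t) y x).
    intros t ht.
    assert (h0 : 1 < t). { pose proof (Rmin_glb_lt y x 1 ltac:(lra) ltac:(lra)). lra. }
    split; [|split; [|split]].
    + split. left; apply gf_pos. apply gf_tail; auto; lra.
    + apply gf_cont; lra.
    + auto_derive. lra. field. lra.
    + apply (ex_derive_continuous (K:=R_AbsRing) (V:=R_NormedModule)).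
      auto_derive. nra.
Qed.

Lemma prod_pos (P : R * R -> Prop) :
  (forall a b, 0 < a -> 0 < b -> P (a, b)) ->
  filter_prod (at_right 0) (Rbar_locally p_infty) P.
Proof.
  intros HP. apply Filter_prod with (fun a => 0 < a) (fun b => 0 < b).
  - assert (h1 : 0 < 1) by lra. exists (mkposreal 1 h1). intros y _ hy; auto.
  - exists 0. auto.
  - intros; apply HP; auto.
Qed.

Lemma Gamma_spec s : 0 < s ->
  is_RInt_gen (gf s) (at_right 0) (Rbar_locally p_infty) (Gamma s) /\ 0 < Gamma s.
Proof.
  intros hs.
  destruct (Fg_lim0 s hs) as [La HLa].
  destruct (Fg_liminf s hs) as [Lb HLb].
  assert (Hi : is_RInt_gen (gf s) (at_right 0) (Rbar_locally p_infty) (Lb - La)).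
  { apply is_RInt_gen_ext with (Derive (Fg s)).
    - apply prod_pos. intros a b ha hb x hx. simpl in hx.
      apply is_derive_unique, Fg_derive. pose proof (Rmin_pos a b ha hb). lra.
    - apply is_RInt_gen_Derive; auto.
      + apply prod_pos. intros a b ha hb x hx. simpl in hx.
        eexists. apply Fg_derive. pose proof (Rmin_pos a b ha hb). lra.
      + apply prod_pos. intros a b ha hb x hx. simpl in hx.
        assert (hx0 : 0 < x) by (pose proof (Rmin_pos a b ha hb); lra).
        apply continuous_ext_loc with (gf s).
        eapply filter_imp. 2: apply loc_pos; exact hx0.
        intros y hy. symmetry. apply is_derive_unique, Fg_derive; auto.
        apply gf_cont; auto. }
  assert (HG : Gamma s = Lb - La).
  { rewrite Gamma_def. apply is_RInt_gen_unique. auto. }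
  rewrite HG. split; auto.
  assert (h1 : La <= 0).
  { apply (lim_le (at_right 0) (Fg s) La 0 HLa).
    assert (h1 : 0 < 1) by lra. exists (mkposreal 1 h1). intros y hy hy0.
    change (Rabs (y - 0) < 1) in hy. rewrite Rminus_0_r in hy. apply Rabs_def2 in hy.
    assert (Fg s 1 - Fg s y = RInt (gf s) y 1) by (apply Fg_diff; lra).
    assert (Fg s 1 = 0) by (unfold Fg; apply (RInt_point (V:=R_CompleteNormedModule))).
    assert (0 <= RInt (gf s) y 1).
    { apply RInt_ge_0. lra. apply ex_RInt_gf; lra. intros; left; apply gf_pos. }
    lra. }
  assert (h2 : Fg s 2 <= Lb).
  { apply (lim_ge (Rbar_locally p_infty) (Fg s) Lb _ HLb).
    exists 2. intros x hx.
    assert (Fg s x - Fg s 2 = RInt (gf s) 2 x) by (apply Fg_diff; lra).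
    assert (0 <= RInt (gf s) 2 x).
    { apply RInt_ge_0. lra. apply ex_RInt_gf; lra. intros; left; apply gf_pos. }
    lra. }
  assert (h3 : 0 < Fg s 2).
  { unfold Fg. apply RInt_gt_0. lra. intros; apply gf_pos. intros; apply gf_cont; lra. }
  lra.
Qed.

Lemma Gamma_rec s : 0 < s -> Gamma (s + 1) = s * Gamma s.
Proof.
  intros hs.
  set (f := fun t => - (Rpower t s * exp (- t))).
  set (df := fun t => gf (s + 1) t - s * gf s t).
  assert (Hd : forall t, 0 < t -> is_derive f t (df t)).
  { intros t ht. unfold f, df, gf. replace (s + 1 - 1) with s by ring.
    rewrite Rpower_minus1 by auto. unfold Rpower. auto_derive. auto.
    field. lra. }
  assert (Hi : is_RInt_gen (Derive f) (at_right 0) (Rbar_locally p_infty) (0 - 0)).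
  { apply is_RInt_gen_Derive; auto.
    - apply prod_pos. intros a b ha hb x hx. simpl in hx.
      eexists. apply Hd. pose proof (Rmin_pos a b ha hb). lra.
    - apply prod_pos. intros a b ha hb x hx. simpl in hx.
      assert (hx0 : 0 < x) by (pose proof (Rmin_pos a b ha hb); lra).
      apply continuous_ext_loc with df.
      eapply filter_imp. 2: apply loc_pos; exact hx0.
      intros y hy. symmetry. apply is_derive_unique, Hd; auto.
      unfold df. apply (continuous_minus (V:=R_NormedModule)). apply gf_cont; auto.
      apply (continuous_scal_r (K:=R_AbsRing) (V:=R_NormedModule)). apply gf_cont; auto.
    - apply (lim_0_dom _ 1 s); auto. intros t ht. unfold f.
      rewrite Rabs_Ropp, Rabs_pos_eq. rewrite Rmult_1_l.
      pattern (Rpower t s) at 2; rewrite <- Rmult_1_r.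
      apply Rmult_le_compat_l. left; apply Rpower_pos.
      rewrite <- exp_0. left. apply exp_increasing. lra.
      left; apply Rmult_lt_0_compat; [apply Rpower_pos | apply exp_pos].
    - destruct (exists_n s) as [n [hn1 hn2]].
      apply (lim_inf_dom _ (INR n ^ n)). intros t ht. unfold f.
      rewrite Rabs_Ropp, Rabs_pos_eq. apply tail_bound; auto.
      left; apply Rmult_lt_0_compat; [apply Rpower_pos | apply exp_pos]. }
  destruct (Gamma_spec s hs) as [Hs _].
  apply (is_RInt_gen_scal _ s) in Hs.
  pose proof (is_RInt_gen_plus _ _ _ _ Hi Hs) as Hp.
  assert (Hq : is_RInt_gen (gf (s + 1)) (at_right 0) (Rbar_locally p_infty)
                 (plus (0 - 0) (scal s (Gamma s)))).
  { eapply is_RInt_gen_ext. 2: exact Hp.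
    apply prod_pos. intros a b ha hb x hx. simpl in hx.
    assert (hx0 : 0 < x) by (pose proof (Rmin_pos a b ha hb); lra).
    rewrite (is_derive_unique f x (df x)) by (apply Hd; auto).
    unfold df, plus, scal; simpl. unfold mult; simpl. ring. }
  rewrite Gamma_def. rewrite (is_RInt_gen_unique _ _ Hq).
  unfold plus, scal; simpl. unfold mult; simpl. ring.
Qed.

Definition cb nu (m : nat) := (-1) ^ m / (INR (fact m) * Gamma (INR m + nu + 1)).

Lemma Gpos nu m : 0 < nu -> 0 < Gamma (INR m + nu + 1).
Proof. intros h. apply Gamma_spec. pose proof (pos_INR m). lra. Qed.

Lemma fact_pos m : 0 < INR (fact m).
Proof. apply lt_0_INR. apply lt_O_fact. Qed.

Lemma cb_rec nu m : 0 < nu -> cb nu (S m) = - cb nu m / ((INR m + 1) * (INR m + nu + 1)).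
Proof.
  intros hnu. unfold cb.
  replace (INR (S m) + nu + 1) with ((INR m + nu + 1) + 1) by (rewrite S_INR; ring).
  rewrite Gamma_rec by (pose proof (pos_INR m); lra).
  rewrite fact_simpl, mult_INR, S_INR. simpl pow.
  pose proof (Gpos nu m hnu). pose proof (fact_pos m). pose proof (pos_INR m).
  field. repeat split; lra.
Qed.

Lemma cb_nz nu m : 0 < nu -> cb nu m <> 0.
Proof.
  intros hnu. unfold cb. pose proof (Gpos nu m hnu). pose proof (fact_pos m).
  apply Rmult_integral_contrapositive. split. apply pow_nonzero. lra.
  apply Rinv_neq_0_compat. apply Rgt_not_eq. apply Rmult_lt_0_compat; auto.
Qed.

Lemma CV_cb nu : 0 < nu -> CV_radius (cb nu) = p_infty.
Proof.
  intros hnu. apply CV_radius_infinite_DAlembert. intros; apply cb_nz; auto.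
  apply is_lim_seq_le_le with (fun _ => 0) (fun n => / INR (S n)).
  - intros n. rewrite cb_rec by auto. pose proof (cb_nz nu n hnu). pose proof (pos_INR n).
    replace (- cb nu n / ((INR n + 1) * (INR n + nu + 1)) / cb nu n)
      with (- / ((INR n + 1) * (INR n + nu + 1))) by (field; repeat split; lra).
    rewrite Rabs_Ropp. rewrite Rabs_pos_eq. split.
    left; apply Rinv_0_lt_compat; apply Rmult_lt_0_compat; lra.
    rewrite S_INR. apply Rinv_le_contravar. lra. nra.
    left; apply Rinv_0_lt_compat; apply Rmult_lt_0_compat; lra.
  - apply is_lim_seq_const.
  - apply (is_lim_seq_incr_1 (fun n => / INR n)).
    apply (is_lim_seq_inv INR p_infty). apply is_lim_seq_INR. discriminate.
Qed.

Section Bes.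
Variable nu : R.
Hypothesis hnu : 0 < nu.

Let c := cb nu.
Let c1 := PS_derive c.
Let c2 := PS_derive c1.

Lemma rad y : Rbar_lt (Rabs y) (CV_radius c).
Proof. unfold c; rewrite CV_cb by auto. simpl; auto. Qed.
Lemma rad1 y : Rbar_lt (Rabs y) (CV_radius c1).
Proof. unfold c1; rewrite CV_radius_derive. apply rad. Qed.
Lemma rad2 y : Rbar_lt (Rabs y) (CV_radius c2).
Proof. unfold c2; rewrite CV_radius_derive. apply rad1. Qed.

Lemma hode y : y * PSeries c2 y + (nu + 1) * PSeries c1 y + PSeries c y = 0.
Proof.
  rewrite <- PSeries_incr_1, <- PSeries_scal.
  rewrite <- PSeries_plus.
  rewrite <- PSeries_plus.
  rewrite <- (PSeries_const_0 y). apply PSeries_ext.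
  intros n. unfold PS_plus, PS_scal, PS_incr_1, c2, c1, PS_derive.
  unfold plus, scal, zero; simpl. unfold mult; simpl.
  destruct n.
  - unfold c. rewrite cb_rec by auto. simpl. pose proof (cb_nz nu 0 hnu). field. lra.
  - unfold c. rewrite (cb_rec nu (S n)) by auto. rewrite !S_INR.
    change (match n with 0%nat => 1 | S _ => INR n + 1 end) with (INR (S n)).
    rewrite !S_INR. pose proof (pos_INR n). field. lra.
  - apply ex_pseries_plus. apply ex_pseries_incr_1, CV_radius_inside, rad2.
    apply ex_pseries_scal. unfold mult; simpl; ring. apply CV_radius_inside, rad1.
  - apply CV_radius_inside, rad.
  - apply ex_pseries_incr_1, CV_radius_inside, rad2.
  - apply ex_pseries_scal. unfold mult; simpl; ring. apply CV_radius_inside, rad1.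
Qed.

Definition En y := PSeries c y ^ 2 + y * PSeries c1 y ^ 2.

Lemma En_derive y : is_derive En y (- (2 * nu + 1) * PSeries c1 y ^ 2).
Proof.
  unfold En. auto_derive.
  split. eexists; apply is_derive_PSeries, rad. split; auto.
  eexists; apply is_derive_PSeries, rad1.
  change (fun x => PSeries c x) with (PSeries c).
  change (fun x => PSeries c1 x) with (PSeries c1).
  rewrite !Derive_PSeries by (apply rad || apply rad1).
  fold c1 c2. pose proof (hode y). fold c c1 c2 in H.
  replace (PSeries c y) with (- (y * PSeries c2 y + (nu + 1) * PSeries c1 y)) by lra.
  ring.
Qed.

Lemma h_bound y : 0 <= y -> PSeries c y <= c 0%nat.
Proof.
  intros hy.
  destruct (MVT_gen En 0 y (fun t => - (2 * nu + 1) * PSeries c1 t ^ 2)) as [xi [_ Hm]].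
  - intros; apply En_derive.
  - intros x _. apply continuity_pt_filterlim.
    apply (ex_derive_continuous (K:=R_AbsRing) (V:=R_NormedModule)).
    eexists; apply En_derive.
  - assert (HE0 : En 0 = c 0%nat ^ 2) by (unfold En; rewrite PSeries_0; ring).
    assert (Hle : En y <= En 0).
    { assert (0 <= PSeries c1 xi ^ 2) by (apply pow2_ge_0).
      assert (0 <= (2 * nu + 1) * PSeries c1 xi ^ 2) by (apply Rmult_le_pos; lra).
      nra. }
    assert (Hc0 : 0 < c 0%nat).
    { unfold c, cb. simpl. pose proof (Gpos nu 0 hnu). rewrite Rmult_1_l.
      simpl in H. apply Rdiv_lt_0_compat; lra. }
    assert (HEy : PSeries c y ^ 2 <= En y).
    { unfold En. assert (0 <= PSeries c1 y ^ 2) by apply pow2_ge_0. nra. }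
    nra.
Qed.

Lemma h_cont : continuous (PSeries c) 0.
Proof.
  apply (ex_derive_continuous (K:=R_AbsRing) (V:=R_NormedModule)).
  eexists; apply is_derive_PSeries, rad.
Qed.

End Bes.

Lemma cb0 nu : 0 < nu -> cb nu 0 = / Gamma (1 + nu).
Proof.
  intros h. pose proof (Gpos nu 0 h). unfold cb. simpl in *.
  replace (0 + nu + 1) with (1 + nu) in * by ring. field. lra.
Qed.

Lemma Bessel_eq nu x : 0 < x -> BesselJ nu x = Rpower (x / 2) nu * PSeries (cb nu) ((x / 2) ^ 2).
Proof.
  intros hx. unfold BesselJ, PSeries. rewrite <- Series_scal_l. apply Series_ext. intros m.
  unfold cb. rewrite Rpower_plus. rewrite <- pow_mult.
  replace (2 * INR m) with (INR (2 * m)) by (rewrite mult_INR; reflexivity).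
  rewrite Rpower_pow by lra. ring.
Qed.

Lemma G_step_eq d N rho r : 0 < rho -> 0 < r ->
  G_step d N rho r =
  1 - / N * (Rpower PI (INR d / 2) * rho ^ d) * PSeries (cb (INR d / 2)) ((PI * rho * r) ^ 2).
Proof.
  intros hr hr'. unfold G_step. pose proof PI_RGT_0.
  rewrite Bessel_eq by (apply Rmult_lt_0_compat; [|lra]; apply Rmult_lt_0_compat; lra).
  replace (2 * PI * rho * r / 2) with (PI * rho * r) by field.
  rewrite <- !Rmult_assoc. rewrite (Rmult_assoc (/ N)).
  rewrite Rpower_mult_distr by (try apply Rdiv_lt_0_compat; try (apply Rmult_lt_0_compat; [|lra]; apply Rmult_lt_0_compat); lra).
  replace (rho / r * (PI * rho * r)) with (PI * (rho * rho)) by (field; lra).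
  rewrite <- Rpower_mult_distr by nra.
  replace (rho * rho) with (Rpower rho (INR 2)) by (rewrite Rpower_pow by lra; ring).
  rewrite Rpower_mult. replace (INR 2 * (INR d / 2)) with (INR d) by (simpl; field).
  rewrite Rpower_pow by lra. ring.
Qed.

Lemma realiz_iff d N rho : (1 <= d)%nat -> 0 < N -> 0 < rho ->
  (realizable d N rho <-> Rpower PI (INR d / 2) * rho ^ d <= N * Gamma (1 + INR d / 2)).
Proof.
  intros hd hN hr.
  set (nu := INR d / 2).
  assert (hnu : 0 < nu). { unfold nu. assert (1 <= INR d) by (apply (le_INR 1); lia). lra. }
  set (A := Rpower PI nu * rho ^ d).
  assert (hA : 0 < A) by (apply Rmult_lt_0_compat; [apply Rpower_pos | apply pow_lt; lra]).
  set (G1 := Gamma (1 + nu)).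
  assert (hG : 0 < G1) by (apply Gamma_spec; lra).
  assert (hK : 0 < / N * A) by (apply Rmult_lt_0_compat; auto; apply Rinv_0_lt_compat; auto).
  pose proof (cb0 nu hnu) as Hc0. fold G1 in Hc0.
  split.
  - intros [_ HR]. destruct (Rle_lt_dec A (N * G1)) as [h|h]; auto. exfalso.
    set (K := / N * A). assert (hK0 : 0 < K) by (unfold K; lra).
    assert (hKG : 1 < K * / G1).
    { unfold K. apply Rmult_lt_reg_r with (N * G1). nra.
      replace (/ N * A * / G1 * (N * G1)) with A by (field; lra). lra. }
    assert (he : 0 < / G1 - / K).
    { assert (/ K < / G1). { apply Rmult_lt_reg_l with K. unfold K; lra. rewrite Rinv_r by (unfold K; lra). lra. } lra. }
    pose proof (h_cont nu hnu) as Hc.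
    apply filterlim_locally with (eps := mkposreal _ he) in Hc.
    destruct Hc as [del Hdel].
    set (m := Rmin (del / 2) (1 / 2)).
    assert (hm0 : 0 < m) by (apply Rmin_pos; [destruct del; simpl; lra | lra]).
    assert (hm1 : m <= del / 2) by apply Rmin_l.
    assert (hm2 : m <= 1 / 2) by apply Rmin_r.
    pose proof PI_RGT_0.
    set (r := m / (PI * rho)).
    assert (hrp : 0 < r) by (unfold r; apply Rdiv_lt_0_compat; [lra | apply Rmult_lt_0_compat; lra]).
    specialize (HR r hrp). rewrite G_step_eq in HR by auto. fold nu A in HR.
    replace (PI * rho * r) with m in HR by (unfold r; field; lra).
    assert (hb : ball 0 del (m ^ 2)).
    { change (Rabs (m ^ 2 - 0) < del). rewrite Rminus_0_r, Rabs_pos_eq by nra.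
      destruct del; simpl in *; nra. }
    specialize (Hdel _ hb). change (Rabs (PSeries (cb nu) (m ^ 2) - PSeries (cb nu) 0) < / G1 - / K) in Hdel.
    rewrite PSeries_0, Hc0 in Hdel. apply Rabs_def2 in Hdel.
    assert (K * PSeries (cb nu) (m ^ 2) > 1).
    { assert (PSeries (cb nu) (m ^ 2) > / K) by lra.
      apply Rmult_gt_compat_l with (r := K) in H0; auto. rewrite Rinv_r in H0 by lra. lra. }
    unfold K in H0. lra.
  - intros HA. split; auto. intros r hrp. rewrite G_step_eq by auto. fold nu A.
    pose proof (h_bound nu hnu ((PI * rho * r) ^ 2) ltac:(apply pow2_ge_0)) as Hb.
    rewrite Hc0 in Hb.
    assert (/ N * A * PSeries (cb nu) ((PI * rho * r) ^ 2) <= / N * A * / G1)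
      by (apply Rmult_le_compat_l; lra).
    assert (/ N * A * / G1 <= 1).
    { apply Rmult_le_reg_r with (N * G1). nra.
      replace (/ N * A * / G1 * (N * G1)) with A by (field; lra). lra. }
    lra.
Qed.

Theorem lemma5 (d : nat) (Hd : (1 <= d)%nat) :
  (forall N : R, 0 < N ->
     realizable d N (rho_star d N) /\
     (forall rho_z : R, realizable d N rho_z -> rho_z <= rho_star d N))
  /\
  (forall rho_z : R, 0 < rho_z ->
     realizable d (N_min d rho_z) rho_z /\
     (forall N : R, 0 < N -> realizable d N rho_z -> N_min d rho_z <= N)).
Proof.
  assert (hd : 0 < INR d) by (apply lt_0_INR; lia).
  assert (hG : 0 < Gamma (1 + INR d / 2)) by (apply Gamma_spec; lra).
  assert (hP : 0 < Rpower PI (INR d / 2)) by apply Rpower_pos.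
  split.
  - intros N hN.
    set (B := N * Gamma (1 + INR d / 2) / Rpower PI (INR d / 2)).
    assert (hB : 0 < B) by (unfold B; apply Rdiv_lt_0_compat; nra).
    assert (hs : 0 < rho_star d N) by apply Rpower_pos.
    assert (hsd : rho_star d N ^ d = B).
    { unfold rho_star. fold B. rewrite <- Rpower_pow by apply Rpower_pos.
      rewrite Rpower_mult, Rinv_l, Rpower_1 by lra; auto. }
    split.
    + apply realiz_iff; auto. rewrite hsd. unfold B. right. field. lra.
    + intros rho Hr. assert (hr : 0 < rho) by apply Hr.
      apply realiz_iff in Hr; auto.
      assert (h1 : rho ^ d <= B).
      { unfold B. apply Rmult_le_reg_l with (Rpower PI (INR d / 2)); auto.
        replace (Rpower PI (INR d / 2) * (N * Gamma (1 + INR d / 2) / Rpower PI (INR d / 2)))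
          with (N * Gamma (1 + INR d / 2)) by (field; lra). auto. }
      assert (h2 : rho = Rpower (rho ^ d) (/ INR d)).
      { rewrite <- Rpower_pow, Rpower_mult, Rinv_r, Rpower_1 by lra; auto. }
      rewrite h2. unfold rho_star. fold B. apply Rle_Rpower_l.
      left; apply Rinv_0_lt_compat; auto. split; auto. apply pow_lt; auto.
  - intros rho hr.
    assert (hN : 0 < N_min d rho).
    { unfold N_min. apply Rdiv_lt_0_compat; auto. apply Rmult_lt_0_compat; auto. apply pow_lt; auto. }
    split.
    + apply realiz_iff; auto. unfold N_min. right. field. lra.
    + intros N hN' Hr. apply realiz_iff in Hr; auto. unfold N_min.
      apply Rmult_le_reg_r with (Gamma (1 + INR d / 2)); auto.
      replace (Rpower PI (INR d / 2) * rho ^ d / Gamma (1 + INR d / 2) * Gamma (1 + INR d / 2))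
        with (Rpower PI (INR d / 2) * rho ^ d) by (field; lra). auto.
Qed.
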